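(* For every formula $q\in F(V)$: $\vDash_{\mathbb{SQW^*}}q$ if and only if $\vdash_{\mathrm{sq}\L^*}q$.
   Context: Let $V$ be a set of propositional variables and $F(V)$ the set of formulas built from $V$ and the constant $1$ using $\to$ and $\neg$. Abbreviations: $p^+:=(p\to 1)\to 1$, $p^-:=(p\to\neg 1)\to\neg 1$ (binding more tightly than $\neg$), $p\vee q:=((p^+\to q^+)^+\to(\neg p)^-)\to((q^-\to p^-)^-\to p^-)$; an axiom ''$p\leftrightarrow q$'' stands for the two axioms $p\to q$ and $q\to p$. The logic $\mathrm{sq}\L^*$ has axiom schemas (for all $p,q,r\in F(V)$): (Q1) $(p\to q)\leftrightarrow(\neg q\to\neg p)$; (Q2) $1\leftrightarrow((1\to p)\to 1)$; (Q3) $p\leftrightarrow((q\to q)\to p)$; (Q4) $(p\to q)\leftrightarrow((q^+\to p^-)\to(p^+\to q^-))$; (Q5) $\neg(p\to q)\leftrightarrow(q\to p)$; (Q6) $(p\to(\neg p\to q))^+\leftrightarrow(p^+\to(\neg p^+\to q^+))$; (Q7) $(p\to(q\vee r))\leftrightarrow((p\to r)\vee(p\to q))$; (Q8) $(p\vee(q\vee r))\leftrightarrow((p\vee q)\vee r)$; (Q9) $((p\to 1)\to((q\to 1)\to r))\to((q\to 1)\to((p\to 1)\to r))$; (Q10) $p\to 1$; and rules: (qMP) from $(r\to r)\to p$ and $(r\to r)\to(p\to q)$ infer $(r\to r)\to q$; (Reg) from $p$ infer $(r\to r)\to p$; (AReg1) from $(r\to r)\to(p\to q)$ infer $p\to q$;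 (AReg2) from $(r\to r)\to\neg(p\to q)$ infer $\neg(p\to q)$; (AReg3) from $(r\to r)\to\neg 1$ infer $\neg 1$; (AReg4) from $(r\to r)\to 1$ infer $1$; (Inv1) from $p$ infer $\neg\neg p$; (Inv2) from $\neg\neg p$ infer $p$; (Flat) from $p$ and $\neg 1$ infer $\neg p$; (R2$'$) from $p\to q$ and $r\to t$ infer $(q\to r)\to(p\to t)$; (R3$'$) from $(r\to r)\to p$ infer $p^-$. $\vdash_{\mathrm{sq}\L^*}q$ means there is a finite sequence ending with $q$ whose members are axiom instances or follow from earlier members by rules. Semantics: a quasi-Wajsberg* algebra is an algebra $\langle W;\to,\neg,{}^+,{}^-,1\rangle$ of type $\langle 2,1,1,1,0\rangle$ such that for all $x,y,z$: $x\to y=\neg y\to\neg x$; $(x\to 1)\to((y\to 1)\to z)=(y\to 1)\to((x\to 1)\to z)$; $(1\to x)\to 1=1$; $(z\to z)\to(x\to y)=x\to y$; $(1\to 1)\to x^{+}=((1\to 1)\to x)^{+}=(x\to 1)\to 1$ and $(1\to 1)\to x^{-}=((1\to 1)\to x)^{-}=(x\to\neg 1)\to\neg 1$; $x\to y=(y^{+}\to x^{-})\to(x^{+}\to y^{-})$; $\neg(x\to y)=y\to x$; $\neg\neg x=x$; $(x\to(\neg x\to y))^{+}=x^{+}\to(\neg x^{+}\to y^{+})$; $x\vee y=y\vee x$; $x\vee(y\vee z)=(x\vee y)\vee z$; $x\to(y\vee z)=(x\to y)\vee(x\to z)$, with $x\vee y:=((x^{+}\to y^{+})^{+}\to(\neg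 x)^{-})\to((y^{-}\to x^{-})^{-}\to x^{-})$. A strong quasi-Wajsberg* algebra additionally satisfies $x^+=(1\to 1)\to x^+$ and $x^-=(1\to 1)\to x^-$; $\mathbb{SQW^*}$ is the class of these. An element $d$ of such an algebra $\mathbf{A}$ is designated if $d=(c\to 1)\to 1$ for some $c\in A$. $\vDash_{\mathbb{SQW^*}}q$ means: for every $\mathbf{A}\in\mathbb{SQW^*}$ and every assignment of the variables in $A$, the value of $q$ (computing $\to,\neg,1$ in $\mathbf{A}$) is designated. *)

(* Defs.v *)
Set Implicit Arguments.

Inductive form (V : Type) : Type :=
| Var : V -> form V
| One : form V
| Imp : form V -> form V -> form V
| Neg : form V -> form V.
Arguments One {V}.

Section Abbrev.
Variable V : Type.
Definition fplus (p : form V) : form V := Imp (Imp p One) One.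
Definition fminus (p : form V) : form V := Imp (Imp p (Neg One)) (Neg One).
Definition fvee (p q : form V) : form V :=
  Imp (Imp (fplus (Imp (fplus p) (fplus q))) (fminus (Neg p)))
      (Imp (fminus (Imp (fminus q) (fminus p))) (fminus p)).
End Abbrev.

(** Pairs (lhs, rhs) of the biconditional axiom schemas (Q1)-(Q8);
    "p <-> q" stands for the two axioms p -> q and q -> p. *)
Inductive axiom_iff (V : Type) : form V -> form V -> Prop :=
| Q1 p q : axiom_iff (Imp p q) (Imp (Neg q) (Neg p))
| Q2 p : axiom_iff One (Imp (Imp One p) One)
| Q3 p q : axiom_iff p (Imp (Imp q q) p)
| Q4 p q : axiom_iff (Imp p q)
                     (Imp (Imp (fplus q) (fminus p)) (Imp (fplus p) (fminus q)))
| Q5 p q : axiom_iff (Neg (Imp p q)) (Imp q p)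
| Q6 p q : axiom_iff (fplus (Imp p (Imp (Neg p) q)))
                     (Imp (fplus p) (Imp (Neg (fplus p)) (fplus q)))
| Q7 p q r : axiom_iff (Imp p (fvee q r)) (fvee (Imp p r) (Imp p q))
| Q8 p q r : axiom_iff (fvee p (fvee q r)) (fvee (fvee p q) r).

Inductive provable (V : Type) : form V -> Prop :=
| ax_iff_l p q : axiom_iff p q -> provable (Imp p q)
| ax_iff_r p q : axiom_iff p q -> provable (Imp q p)
| Q9 p q r : provable
    (Imp (Imp (Imp p One) (Imp (Imp q One) r))
         (Imp (Imp q One) (Imp (Imp p One) r)))
| Q10 p : provable (Imp p One)
| qMP r p q : provable (Imp (Imp r r) p) -> provable (Imp (Imp r r) (Imp p q)) ->
              provable (Imp (Imp r r) q)
| Reg r p : provable p -> provable (Imp (Imp r r) p)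
| AReg1 r p q : provable (Imp (Imp r r) (Imp p q)) -> provable (Imp p q)
| AReg2 r p q : provable (Imp (Imp r r) (Neg (Imp p q))) -> provable (Neg (Imp p q))
| AReg3 r : provable (Imp (Imp r r) (Neg One)) -> provable (Neg One)
| AReg4 r : provable (Imp (Imp r r) One) -> provable One
| Inv1 p : provable p -> provable (Neg (Neg p))
| Inv2 p : provable (Neg (Neg p)) -> provable p
| Flat p : provable p -> provable (Neg One) -> provable (Neg p)
| R2' p q r t : provable (Imp p q) -> provable (Imp r t) ->
                provable (Imp (Imp q r) (Imp p t))
| R3' r p : provable (Imp (Imp r r) p) -> provable (fminus p).

Record SQWalg : Type := {
  carrier :> Type;
  aimp : carrier -> carrier -> carrier;
  aneg : carrier -> carrier;
  aplus : carrier -> carrier;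
  aminus : carrier -> carrier;
  aone : carrier;
  avee : carrier -> carrier -> carrier :=
    fun x y => aimp (aimp (aplus (aimp (aplus x) (aplus y))) (aminus (aneg x)))
                    (aimp (aminus (aimp (aminus y) (aminus x))) (aminus x));
  ax1 : forall x y, aimp x y = aimp (aneg y) (aneg x);
  ax2 : forall x y z, aimp (aimp x aone) (aimp (aimp y aone) z)
                      = aimp (aimp y aone) (aimp (aimp x aone) z);
  ax3 : forall x, aimp (aimp aone x) aone = aone;
  ax4 : forall x y z, aimp (aimp z z) (aimp x y) = aimp x y;
  ax5a : forall x, aimp (aimp aone aone) (aplus x) = aplus (aimp (aimp aone aone) x);
  ax5b : forall x, aplus (aimp (aimp aone aone) x) = aimp (aimp x aone) aone;
  ax6a : forall x, aimp (aimp aone aone) (aminus x) = aminus (aimp (aimp aone aone) x);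
  ax6b : forall x, aminus (aimp (aimp aone aone) x) = aimp (aimp x (aneg aone)) (aneg aone);
  ax7 : forall x y, aimp x y = aimp (aimp (aplus y) (aminus x)) (aimp (aplus x) (aminus y));
  ax8 : forall x y, aneg (aimp x y) = aimp y x;
  ax9 : forall x, aneg (aneg x) = x;
  ax10 : forall x y, aplus (aimp x (aimp (aneg x) y))
                     = aimp (aplus x) (aimp (aneg (aplus x)) (aplus y));
  ax11 : forall x y, avee x y = avee y x;
  ax12 : forall x y z, avee x (avee y z) = avee (avee x y) z;
  ax13 : forall x y z, aimp x (avee y z) = avee (aimp x y) (aimp x z);
  axS1 : forall x, aplus x = aimp (aimp aone aone) (aplus x);
  axS2 : forall x, aminus x = aimp (aimp aone aone) (aminus x)
}.

Definition designated (A : SQWalg) (d : A) : Prop :=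
  exists c : A, d = aimp A (aimp A c (aone A)) (aone A).

Fixpoint eval (V : Type) (A : SQWalg) (v : V -> A) (q : form V) : A :=
  match q with
  | Var x => v x
  | One => aone A
  | Imp p r => aimp A (eval A v p) (eval A v r)
  | Neg p => aneg A (eval A v p)
  end.

Definition sqw_valid (V : Type) (q : form V) : Prop :=
  forall (A : SQWalg) (v : V -> A), designated A (eval A v q).

(* Main.v *)
Require Import Defs.
From Stdlib Require Import Setoid FunctionalExtensionality PropExtensionality ProofIrrelevance ClassicalEpsilon.

Section Alg.
Variable A : SQWalg.
Local Notation "x --> y" := (aimp A x y) (at level 55, right associativity).
Local Notation ng := (aneg A).
Local Notation one := (aone A).
Local Notation o := (aimp A (aone A) (aone A)).
Local Notation f := (aneg A (aone A)).
Local Notation Pl := (aplus A).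
Local Notation Mi := (aminus A).
Local Notation vee := (avee A).
Local Notation W x y := (aneg A (avee A (aneg A x) (aneg A y))).

Lemma plus_def x : Pl x = (x --> one) --> one.
Proof. rewrite (axS1 A x), (ax5a A x), (ax5b A x). reflexivity. Qed.
Lemma minus_def x : Mi x = (x --> f) --> f.
Proof. rewrite (axS2 A x), (ax6a A x), (ax6b A x). reflexivity. Qed.
Lemma vee_def x y : vee x y = ((Pl (Pl x --> Pl y) --> Mi (ng x)) --> (Mi (Mi y --> Mi x) --> Mi x)).
Proof. reflexivity. Qed.

Lemma nn x : ng (ng x) = x. Proof. apply ax9. Qed.
Lemma imp_ng x y : x --> y = ng (y --> x).
Proof. rewrite (ax8 A y x). reflexivity. Qed.
Lemma ng_o : ng o = o. Proof. apply ax8. Qed.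
Lemma oo z : z --> z = o.
Proof.
  pose proof (ax4 A one one z) as H1. pose proof (ax4 A z z one) as H2.
  pose proof (ax8 A (z --> z) o) as H3. rewrite H1, H2, ng_o in H3. congruence.
Qed.
Lemma o1 : o --> one = one. Proof. apply ax3. Qed.
Lemma one_o : one --> o = f.
Proof. pose proof (ax8 A one o) as H. rewrite o1 in H. apply (f_equal ng) in H. rewrite nn in H. exact H. Qed.
Lemma f1 : f --> one = one.
Proof. pose proof (ax3 A o) as H. rewrite one_o in H. exact H. Qed.
Lemma one_f : one --> f = f.
Proof. pose proof (ax8 A f one) as H. rewrite f1 in H. symmetry. exact H. Qed.
Lemma o_f : o --> f = f.
Proof. rewrite (ax1 A o f), nn, ng_o, one_o. reflexivity. Qed.
Lemma f_o : f --> o = one.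
Proof. rewrite imp_ng, o_f, nn. reflexivity. Qed.
Lemma ox_imp x y : o --> (x --> y) = x --> y. Proof. apply ax4. Qed.

Lemma Pl2 x : Pl x = f --> (one --> x).
Proof. rewrite plus_def, (ax1 A (x --> one) one), (ax8 A x one). reflexivity. Qed.
Lemma Mi2 x : Mi x = one --> (f --> x).
Proof. rewrite minus_def, (ax1 A (x --> f) f), (ax8 A x f), nn. reflexivity. Qed.
Lemma negPl x : ng (Pl x) = Mi (ng x).
Proof.
  rewrite plus_def, (ax8 A (x --> one) one), Mi2, (ax1 A f (ng x)), !nn. reflexivity.
Qed.
Lemma negMi x : ng (Mi x) = Pl (ng x).
Proof.
  pose proof (negPl (ng x)) as H. rewrite nn in H. rewrite <- H, nn. reflexivity.
Qed.
Lemma Mi_Pl x : Mi x = ng (Pl (ng x)).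
Proof. rewrite <- negMi, nn. reflexivity. Qed.
Lemma Pl1 x : Pl x --> one = x --> one.
Proof.
  pose proof (ax2 A x f one) as H. rewrite f1 in H. rewrite <- plus_def in H.
  pose proof (f_equal ng H) as H'. rewrite (ax8 A (x --> one) o), (ax8 A one (Pl x)) in H'.
  rewrite ox_imp in H'. symmetry. exact H'.
Qed.
Lemma PlPl x : Pl (Pl x) = Pl x.
Proof. rewrite (plus_def (Pl x)), Pl1, <- plus_def. reflexivity. Qed.
Lemma MiPl x : Mi (Pl x) = o.
Proof.
  rewrite Mi2, (ax1 A f (Pl x)), nn.
  rewrite (plus_def x) at 1. rewrite (ax8 A (x --> one) one), ax3. reflexivity.
Qed.
Lemma PlMi x : Pl (Mi x) = o.
Proof.
  rewrite <- (nn (Pl (Mi x))), negPl, (negMi x), MiPl, ng_o. reflexivity.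
Qed.
Lemma MiMi x : Mi (Mi x) = Mi x.
Proof. rewrite (Mi_Pl (Mi x)), negMi, PlPl, <- Mi_Pl. reflexivity. Qed.
Lemma Plo : Pl o = o. Proof. rewrite plus_def, o1. reflexivity. Qed.
Lemma Mio : Mi o = o. Proof. rewrite Mi2, f_o. reflexivity. Qed.
Lemma oPl x : o --> Pl x = Pl x. Proof. symmetry. apply axS1. Qed.
Lemma oMi x : o --> Mi x = Mi x. Proof. symmetry. apply axS2. Qed.
Lemma Pl_o x : Pl (o --> x) = Pl x. Proof. rewrite ax5b, plus_def. reflexivity. Qed.
Lemma Mi_o x : Mi (o --> x) = Mi x. Proof. rewrite ax6b, minus_def. reflexivity. Qed.
Lemma cong_l x y : (o --> x) --> y = x --> y.
Proof. rewrite (ax7 A (o --> x) y), Pl_o, Mi_o, <- ax7. reflexivity. Qed.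
Lemma cong_r x y : y --> (o --> x) = y --> x.
Proof. rewrite (ax7 A y (o --> x)), Pl_o, Mi_o, <- ax7. reflexivity. Qed.
Lemma Pl_imp_o x : Pl x --> o = ng (Pl x).
Proof. rewrite (ax1 A (Pl x) o), ng_o, negPl, oMi. reflexivity. Qed.
Lemma repr x : o --> x = ng (Pl x) --> Mi x.
Proof. rewrite (ax7 A o x), Mio, Plo, Pl_imp_o, oMi. reflexivity. Qed.
Lemma vee_o x : vee x o = Pl x.
Proof.
  rewrite vee_def, Plo, Pl_imp_o, negPl, PlMi, oMi, Mio, oMi, MiMi, oo.
  rewrite (ax1 A (Mi (ng x)) o), ng_o, negMi, nn, oPl. reflexivity.
Qed.
Lemma o_vee x : vee o x = Pl x.
Proof. rewrite ax11. apply vee_o. Qed.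
Lemma o_vee_imp x y : o --> vee x y = vee x y.
Proof. rewrite vee_def. apply ox_imp. Qed.
Lemma o_W x y : o --> W x y = W x y.
Proof. rewrite vee_def, ax8. apply ox_imp. Qed.

Lemma L_dist y z x : vee y z --> x = W (y --> x) (z --> x).
Proof. rewrite imp_ng, ax13, (imp_ng x y), (imp_ng x z). reflexivity. Qed.
Lemma LW y z x : W y z --> x = vee (y --> x) (z --> x).
Proof. rewrite (ax1 A _ x), nn, ax13, <- !ax1. reflexivity. Qed.
Lemma RW x y z : x --> W y z = W (x --> y) (x --> z).
Proof. rewrite (ax1 A x), nn, L_dist, <- !ax1. reflexivity. Qed.
Lemma W_comm x y : W x y = W y x. Proof. rewrite ax11. reflexivity. Qed.
Lemma W_assoc x y z : W x (W y z) = W (W x y) z.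
Proof. rewrite !nn, ax12. reflexivity. Qed.
Lemma W_o x : W x o = Mi x.
Proof. rewrite ng_o, vee_o, <- Mi_Pl. reflexivity. Qed.
Lemma Pl_W x y : Pl (W x y) = W (Pl x) (Pl y).
Proof. rewrite !Pl2, RW, RW. reflexivity. Qed.
Lemma vee_assoc x y z : vee x (vee y z) = vee (vee x y) z. Proof. apply ax12. Qed.

Lemma PM_o z : Pl z = z -> Mi z = z -> z = o.
Proof. intros H1 H2. rewrite <- H1, <- H2, PlMi. reflexivity. Qed.
Lemma Zlemma x y : x --> y = o -> Pl x --> Pl y = o.
Proof.
  intros H.
  assert (Hyx : y --> x = o) by (rewrite imp_ng, H, ng_o; reflexivity).
  assert (S1 : forall a b, a --> b = o -> a --> Pl b = Pl (ng a)).
  { intros a b Hab. rewrite <- (vee_o b), ax13, Hab, o_vee, (ax1 A a o), ng_o, Pl_o.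
    reflexivity. }
  assert (S2 : forall a b, a --> b = o -> Pl a --> Pl b = W (Pl (ng a)) (Pl b)).
  { intros a b Hab. rewrite <- (vee_o a) at 1. rewrite L_dist, S1 by exact Hab.
    rewrite oPl. reflexivity. }
  apply PM_o.
  - rewrite S2 by exact H. rewrite Pl_W, !PlPl. reflexivity.
  - assert (HZ : Pl x --> Pl y = ng (W (Pl (ng y)) (Pl x)))
      by (rewrite (imp_ng (Pl x)), (S2 y x Hyx); reflexivity).
    rewrite HZ, Mi_Pl, nn, Pl_W, !PlPl. reflexivity.
Qed.
Lemma AS1 x y : x --> y = o -> vee x y = o --> x.
Proof.
  intros H.
  assert (H1 : Pl (Pl x --> Pl y) = o) by (rewrite Zlemma by exact H; apply Plo).
  assert (H2 : Mi (Mi y --> Mi x) = o).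
  { assert (H' : ng y --> ng x = o) by (rewrite <- ax1; exact H).
    apply Zlemma in H'. rewrite <- !negMi, <- ax1 in H'.
    rewrite imp_ng, H', ng_o, Mio. reflexivity. }
  rewrite vee_def, H1, H2, !oMi, repr, negPl. reflexivity.
Qed.
Lemma antisym x y : x --> y = o -> o --> x = o --> y.
Proof.
  intros H. assert (Hyx : y --> x = o) by (rewrite imp_ng, H, ng_o; reflexivity).
  rewrite <- (AS1 x y H), <- (AS1 y x Hyx). apply ax11.
Qed.
Lemma conv p q : Mi (p --> q) = o -> o --> q = vee p q.
Proof.
  intros H. assert (Hw : vee p q --> q = o).
  { rewrite L_dist, oo, W_o. exact H. }
  apply antisym in Hw. rewrite o_vee_imp in Hw. symmetry. exact Hw.
Qed.

Lemma desig_iff d : designated A d <-> Pl d = d.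
Proof.
  split.
  - intros [c Hc]. rewrite <- plus_def in Hc. subst d. apply PlPl.
  - intros H. exists d. rewrite <- plus_def. symmetry. exact H.
Qed.
Lemma D_Mi d : Pl d = d -> Mi d = o.
Proof. intros H. rewrite <- H. apply MiPl. Qed.
Lemma D_of_Mi x : Mi x = o -> Pl (o --> x) = o --> x.
Proof.
  intros H. rewrite Pl_o, repr, H, (ax1 A _ o), ng_o, nn, oPl. reflexivity.
Qed.

Lemma Wlem X Y : X = W X Y -> Mi X = W (Mi X) Y.
Proof.
  intros E. rewrite <- (W_o X). rewrite E at 1.
  rewrite <- (W_assoc X Y o), (W_comm Y o), (W_assoc X o Y). reflexivity.
Qed.

Lemma sound_MP a b : Pl (o --> a) = o --> a -> Pl (o --> (a --> b)) = o --> (a --> b) ->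
  Pl (o --> b) = o --> b.
Proof.
  intros Ha Hab. rewrite Pl_o in Ha. rewrite ox_imp in Hab.
  apply D_Mi in Hab. apply D_of_Mi.
  assert (E : a --> b = W (a --> b) (o --> b)).
  { rewrite <- (cong_l a b) at 1. rewrite <- Ha, <- vee_o, L_dist. reflexivity. }
  apply Wlem in E. rewrite Hab in E. rewrite W_comm, W_o, Mi_o in E. symmetry. exact E.
Qed.

Lemma sound_R2 p q r t : Pl (p --> q) = p --> q -> Pl (r --> t) = r --> t ->
  Pl ((q --> r) --> (p --> t)) = (q --> r) --> (p --> t).
Proof.
  intros H1 H2. apply D_Mi in H1. apply D_Mi in H2.
  apply conv in H1. apply conv in H2.
  assert (E1 : q --> r = W (p --> r) (q --> r)).
  { rewrite <- (cong_l q r) at 1. rewrite H1, L_dist. reflexivity. }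
  assert (E2 : p --> t = vee (p --> r) (p --> t)).
  { rewrite <- (cong_r t p) at 1. rewrite H2, ax13. reflexivity. }
  rewrite E1, E2.
  generalize (p --> r) (q --> r) (p --> t). intros X Y Z.
  assert (G : W X Y --> vee X Z = Pl (vee (Y --> X) (W X Y --> Z))).
  { rewrite ax13, (LW X Y X), oo, o_vee, <- (vee_o (Y --> X)).
    rewrite <- ax12, (ax11 A o), ax12, vee_o. reflexivity. }
  rewrite G. apply PlPl.
Qed.

Lemma sound_Reg p : Pl p = p -> Pl (o --> p) = o --> p.
Proof. intros H. rewrite Pl_o, <- H, oPl, PlPl. reflexivity. Qed.
Lemma sound_R3 p : Pl (o --> p) = o --> p -> Pl (Mi p) = Mi p.
Proof.
  intros H. rewrite Pl_o in H. assert (Hm : Mi p = o) by (rewrite <- Mi_o, <- H; apply MiPl).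
  rewrite Hm. apply Plo.
Qed.
Lemma sound_Flat p : Pl p = p -> Pl f = f -> Pl (ng p) = ng p.
Proof.
  intros Hp Hf. rewrite plus_def, f1 in Hf.
  assert (H1 : one = o).
  { transitivity (ng f). symmetry; apply nn. rewrite <- Hf. apply ng_o. }
  rewrite <- negMi, minus_def, <- Hf, <- H1, <- plus_def, Hp. reflexivity.
Qed.
Lemma sound_Q10 x : Pl (x --> one) = x --> one.
Proof. rewrite (plus_def (x --> one)), <- (plus_def x), Pl1. reflexivity. Qed.
Lemma Do : Pl o = o. Proof. apply Plo. Qed.
Lemma sound_Q3a x : Pl (x --> (o --> x)) = x --> (o --> x).
Proof. rewrite cong_r, oo. apply Plo. Qed.
Lemma sound_Q3b x : Pl ((o --> x) --> x) = (o --> x) --> x.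
Proof. rewrite cong_l, oo. apply Plo. Qed.
Lemma sound_refl x : Pl (x --> x) = x --> x.
Proof. rewrite oo. apply Plo. Qed.
End Alg.

Section S.
Variable A : SQWalg.
Local Notation "x --> y" := (aimp A x y) (at level 55, right associativity).
Local Notation ng := (aneg A).
Local Notation one := (aone A).
Local Notation o := (aimp A (aone A) (aone A)).
Local Notation f := (aneg A (aone A)).
Local Notation Pl := (aplus A).
Local Notation Mi := (aminus A).

Lemma eval_vee V (v : V -> A) p q :
  eval A v (fvee p q) = avee A (eval A v p) (eval A v q).
Proof. simpl. rewrite vee_def, !plus_def, !minus_def. reflexivity. Qed.

Lemma eval_imp V (v : V -> A) p q : eval A v (Imp p q) = eval A v p --> eval A v q.
Proof. reflexivity. Qed.

Lemma ax7' x y : x --> y = ((((y --> one) --> one) --> ((x --> f) --> f)) -->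
   (((x --> one) --> one) --> ((y --> f) --> f))).
Proof. rewrite (ax7 A x y), !plus_def, !minus_def. reflexivity. Qed.
Lemma ax10' x y : ((x --> (ng x --> y)) --> one) --> one =
  ((x --> one) --> one) --> (ng ((x --> one) --> one) --> ((y --> one) --> one)).
Proof. rewrite <- !plus_def. apply ax10. Qed.

Lemma D_eq x y : x = y -> Pl (x --> y) = x --> y.
Proof. intros ->. apply sound_refl. Qed.

Lemma sound_iff V (v : V -> A) p q : axiom_iff p q ->
  Pl (eval A v (Imp p q)) = eval A v (Imp p q) /\
  Pl (eval A v (Imp q p)) = eval A v (Imp q p).
Proof.
  intros H; destruct H; [simpl..| | ].
  - split; apply D_eq; [apply ax1 | symmetry; apply ax1].
  - split; apply D_eq; [symmetry; apply ax3 | apply ax3].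
  - rewrite oo. split; [apply sound_Q3a | apply sound_Q3b].
  - split; apply D_eq; [apply ax7' | symmetry; apply ax7'].
  - split; apply D_eq; [apply ax8 | symmetry; apply ax8].
  - split; apply D_eq; [apply ax10' | symmetry; apply ax10'].
  - rewrite !eval_imp; split; apply D_eq; rewrite !eval_vee, !eval_imp, ax13, ax11; reflexivity.
  - rewrite !eval_imp; split; apply D_eq; rewrite !eval_vee; [apply ax12 | symmetry; apply ax12].
Qed.
End S.

Theorem soundness V (q : form V) : provable q -> sqw_valid q.
Proof.
  intros H; induction H; intros A v; apply desig_iff;
    try (specialize (IHprovable A v); apply desig_iff in IHprovable);
    try (specialize (IHprovable1 A v); apply desig_iff in IHprovable1);
    try (specialize (IHprovable2 A v); apply desig_iff in IHprovable2).
  - apply (sound_iff A V v p q H).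
  - apply (sound_iff A V v p q H).
  - simpl. apply D_eq. apply ax2.
  - simpl. apply sound_Q10.
  - simpl in *. rewrite (oo A (eval A v r)) in *. apply (sound_MP A (eval A v p) (eval A v q)); assumption.
  - simpl in *. rewrite (oo A (eval A v r)). apply sound_Reg. exact IHprovable.
  - simpl in *. rewrite (oo A (eval A v r)), ax4 in IHprovable. exact IHprovable.
  - simpl in *. rewrite (oo A (eval A v r)), ax8, ax4 in IHprovable. rewrite ax8. exact IHprovable.
  - simpl in *. rewrite (oo A (eval A v r)), o_f in IHprovable. exact IHprovable.
  - simpl. rewrite plus_def. apply ax3.
  - simpl. rewrite nn. exact IHprovable.
  - simpl in *. rewrite nn in IHprovable. exact IHprovable.
  - simpl in *. apply sound_Flat; assumption.
  - simpl in *. apply sound_R2; assumption.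
  - simpl in *. rewrite (oo A (eval A v r)) in IHprovable. rewrite <- minus_def. apply sound_R3. exact IHprovable.
Qed.

(** * A three-element model *)
Inductive T3 : Type := tT | tF | tU.
Definition imp3 (x y : T3) : T3 :=
  match x, y with
  | tT, tT => tU | tF, tF => tU | tU, tU => tU
  | _, tT => tT | _, tF => tF
  | tT, tU => tF | tF, tU => tT
  end.
Definition neg3 (x : T3) : T3 := match x with tT => tF | tF => tT | tU => tU end.
Definition plus3 (x : T3) : T3 := imp3 (imp3 x tT) tT.
Definition minus3 (x : T3) : T3 := imp3 (imp3 x tF) tF.

Definition M3 : SQWalg.
Proof.
  refine (@Build_SQWalg T3 imp3 neg3 plus3 minus3 tT _ _ _ _ _ _ _ _ _ _ _ _ _ _ _ _ _);
  intros; repeat match goal with x : T3 |- _ => destruct x; clear x end; reflexivity.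
Defined.

Lemma M3_not_des : ~ designated M3 tF.
Proof. intros [c Hc]. destruct c; discriminate. Qed.

Section Logic.
Variable V : Type.
Local Notation pr := (@provable V).
Local Notation o := (Imp (@One V) One).

Lemma MPI X a b : pr X -> pr (Imp X (Imp a b)) -> pr (Imp a b).
Proof.
  intros H1 H2. apply (@AReg1 V One).
  apply (@qMP V One X); apply Reg; assumption.
Qed.
Lemma MPo X b : pr X -> pr (Imp X b) -> pr (Imp o b).
Proof. intros H1 H2. apply (@qMP V One X); apply Reg; assumption. Qed.

Lemma prefl r : pr (Imp r r).
Proof.
  set (X := Imp o r). set (Y := Imp o X).
  assert (HY : pr (Imp Y Y)) by (exact (Q9 One One r)).
  assert (H1 : pr (Imp X Y)) by (apply ax_iff_l; apply Q3).
  assert (H2 : pr (Imp Y X)) by (apply ax_iff_r; apply Q3).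
  assert (HX : pr (Imp X X)) by (apply (MPI (Imp Y Y)); [exact HY | apply R2'; assumption]).
  assert (H3 : pr (Imp r X)) by (apply ax_iff_l; apply Q3).
  assert (H4 : pr (Imp X r)) by (apply ax_iff_r; apply Q3).
  apply (MPI (Imp X X)); [exact HX | apply R2'; assumption].
Qed.
Lemma ptrans a b c : pr (Imp a b) -> pr (Imp b c) -> pr (Imp a c).
Proof.
  intros H1 H2. apply (MPI (Imp b c)); [exact H2 |]. apply R2'; [exact H1 | apply prefl].
Qed.

Definition Eq (p q : form V) : Prop := pr (Imp p q) /\ pr (Imp q p).
Lemma Eq_refl p : Eq p p. Proof. split; apply prefl. Qed.
Lemma Eq_sym p q : Eq p q -> Eq q p. Proof. intros [H1 H2]; split; assumption. Qed.
Lemma Eq_trans p q r : Eq p q -> Eq q r -> Eq p r.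
Proof. intros [H1 H2] [H3 H4]; split; eapply ptrans; eassumption. Qed.
Lemma Eq_ax p q : axiom_iff p q -> Eq p q.
Proof. intros H; split; [apply ax_iff_l | apply ax_iff_r]; exact H. Qed.
Lemma cong_imp a a' b b' : Eq a a' -> Eq b b' -> Eq (Imp a b) (Imp a' b').
Proof. intros [H1 H2] [H3 H4]; split; apply R2'; assumption. Qed.
Lemma cong_neg a b : Eq a b -> Eq (Neg a) (Neg b).
Proof.
  intros [H1 H2]; split.
  - apply (MPI (Imp b a)); [exact H2 | apply ax_iff_l; apply Q1].
  - apply (MPI (Imp a b)); [exact H1 | apply ax_iff_l; apply Q1].
Qed.
Lemma cong_plus a b : Eq a b -> Eq (fplus a) (fplus b).
Proof. intros H. unfold fplus. repeat apply cong_imp; auto using Eq_refl. Qed.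
Lemma cong_minus a b : Eq a b -> Eq (fminus a) (fminus b).
Proof. intros H. unfold fminus. repeat apply cong_imp; auto using Eq_refl. Qed.
Lemma cong_vee a a' b b' : Eq a a' -> Eq b b' -> Eq (fvee a b) (fvee a' b').
Proof.
  intros H1 H2. unfold fvee.
  apply cong_imp; apply cong_imp.
  - apply cong_plus, cong_imp; apply cong_plus; assumption.
  - apply cong_minus, cong_neg; assumption.
  - apply cong_minus, cong_imp; apply cong_minus; assumption.
  - apply cong_minus; assumption.
Qed.
Lemma Eq_o p : Eq p (Imp o p).
Proof. apply Eq_ax. apply Q3. Qed.
Lemma Eq_nn p : Eq (Neg (Neg p)) p.
Proof.
  assert (H1 : Eq (Neg (Imp o p)) (Imp p o)) by (apply Eq_ax; apply Q5).
  assert (H2 : Eq (Neg (Imp p o)) (Imp o p)) by (apply Eq_ax; apply Q5).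
  apply (Eq_trans _ (Neg (Neg (Imp o p)))).
  { apply cong_neg, cong_neg, Eq_o. }
  apply (Eq_trans _ (Neg (Imp p o))); [apply cong_neg; exact H1|].
  apply (Eq_trans _ (Imp o p)); [exact H2 | apply Eq_sym, Eq_o].
Qed.
Lemma Eq_vee_comm p q : Eq (fvee p q) (fvee q p).
Proof.
  apply (Eq_trans _ (Imp o (fvee p q))); [apply Eq_o|].
  apply (Eq_trans _ (fvee (Imp o q) (Imp o p))); [apply Eq_ax; apply Q7|].
  apply cong_vee; apply Eq_sym, Eq_o.
Qed.
End Logic.

(** * Lindenbaum algebra *)
Section Lind.
Variable V : Type.
Local Notation pr := (@provable V).
Local Notation o := (Imp (@One V) One).
Local Notation Eq := (@Eq V).

Definition Lc : Type := { P : form V -> Prop | exists p, P = Eq p }.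
Definition cls (p : form V) : Lc := exist _ (Eq p) (ex_intro _ p eq_refl).

Lemma cls_eq p q : cls p = cls q <-> Eq p q.
Proof.
  split.
  - intros H. apply (f_equal (@proj1_sig _ _)) in H. simpl in H.
    assert (Hq : Eq q q) by apply Eq_refl. rewrite <- H in Hq. exact Hq.
  - intros H. unfold cls.
    assert (E : Eq p = Eq q).
    { apply functional_extensionality. intros r. apply propositional_extensionality.
      split; intros Hr.
      - eapply Eq_trans; [apply Eq_sym; exact H | exact Hr].
      - eapply Eq_trans; [exact H | exact Hr]. }
    apply eq_exist_uncurried. exists E. apply proof_irrelevance.
Qed.

Definition rep (c : Lc) : form V :=
  proj1_sig (constructive_indefinite_description _ (proj2_sig c)).
Lemma cls_rep c : cls (rep c) = c.
Proof.
  unfold rep. destruct (constructive_indefinite_description _ (proj2_sig c)) as [p Hp].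
  simpl. destruct c as [P HP]. simpl in Hp. subst P. unfold cls.
  f_equal. apply proof_irrelevance.
Qed.
Lemma cls_surj c : exists p, c = cls p.
Proof. exists (rep c). symmetry. apply cls_rep. Qed.
Lemma rep_cls p : Eq (rep (cls p)) p.
Proof. apply cls_eq. apply cls_rep. Qed.

Definition limp c d := cls (Imp (rep c) (rep d)).
Definition lneg c := cls (Neg (rep c)).
Definition lplus c := cls (fplus (rep c)).
Definition lminus c := cls (fminus (rep c)).
Definition lone := cls One.

Lemma limp_cls p q : limp (cls p) (cls q) = cls (Imp p q).
Proof. apply cls_eq. apply cong_imp; apply rep_cls. Qed.
Lemma lneg_cls p : lneg (cls p) = cls (Neg p).
Proof. apply cls_eq. apply cong_neg; apply rep_cls. Qed.
Lemma lplus_cls p : lplus (cls p) = cls (fplus p).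
Proof. apply cls_eq. apply cong_plus; apply rep_cls. Qed.
Lemma lminus_cls p : lminus (cls p) = cls (fminus p).
Proof. apply cls_eq. apply cong_minus; apply rep_cls. Qed.

Definition lvee x y :=
  limp (limp (lplus (limp (lplus x) (lplus y))) (lminus (lneg x)))
       (limp (lminus (limp (lminus y) (lminus x))) (lminus x)).
Lemma lvee_cls p q : lvee (cls p) (cls q) = cls (fvee p q).
Proof.
  unfold lvee. rewrite !lplus_cls, !lminus_cls, !lneg_cls, !limp_cls, !lplus_cls,
    !lminus_cls, !limp_cls. reflexivity.
Qed.

Ltac lsimp := repeat match goal with c : Lc |- _ =>
  let p := fresh "p" in destruct (cls_surj c) as [p ->] end;
  unfold lone; repeat (rewrite ?lvee_cls, ?limp_cls, ?lneg_cls, ?lplus_cls, ?lminus_cls);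
  apply cls_eq.

Lemma L1 : forall x y, limp x y = limp (lneg y) (lneg x).
Proof. intros; lsimp. apply Eq_ax, Q1. Qed.
Lemma L2 : forall x y z, limp (limp x lone) (limp (limp y lone) z)
                      = limp (limp y lone) (limp (limp x lone) z).
Proof. intros; lsimp. split; apply Q9. Qed.
Lemma L3 : forall x, limp (limp lone x) lone = lone.
Proof. intros; lsimp. apply Eq_sym, Eq_ax, Q2. Qed.
Lemma L4 : forall x y z, limp (limp z z) (limp x y) = limp x y.
Proof. intros; lsimp. apply Eq_sym, Eq_ax, Q3. Qed.
Lemma L5a : forall x, limp (limp lone lone) (lplus x) = lplus (limp (limp lone lone) x).
Proof.
  intros; lsimp. eapply Eq_trans; [apply Eq_sym, Eq_o|]. apply cong_plus, Eq_o.
Qed.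
Lemma L5b : forall x, lplus (limp (limp lone lone) x) = limp (limp x lone) lone.
Proof. intros; lsimp. apply cong_plus, Eq_sym, Eq_o. Qed.
Lemma L6a : forall x, limp (limp lone lone) (lminus x) = lminus (limp (limp lone lone) x).
Proof.
  intros; lsimp. eapply Eq_trans; [apply Eq_sym, Eq_o|]. apply cong_minus, Eq_o.
Qed.
Lemma L6b : forall x, lminus (limp (limp lone lone) x) = limp (limp x (lneg lone)) (lneg lone).
Proof. intros; lsimp. apply cong_minus, Eq_sym, Eq_o. Qed.
Lemma L7 : forall x y, limp x y = limp (limp (lplus y) (lminus x)) (limp (lplus x) (lminus y)).
Proof. intros; lsimp. apply Eq_ax, Q4. Qed.
Lemma L8 : forall x y, lneg (limp x y) = limp y x.
Proof. intros; lsimp. apply Eq_ax, Q5. Qed.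
Lemma L9 : forall x, lneg (lneg x) = x.
Proof. intros; lsimp. apply Eq_nn. Qed.
Lemma L10 : forall x y, lplus (limp x (limp (lneg x) y))
                     = limp (lplus x) (limp (lneg (lplus x)) (lplus y)).
Proof. intros; lsimp. apply Eq_ax, Q6. Qed.
Lemma L11 : forall x y, lvee x y = lvee y x.
Proof. intros; lsimp. apply Eq_vee_comm. Qed.
Lemma L12 : forall x y z, lvee x (lvee y z) = lvee (lvee x y) z.
Proof. intros; lsimp. apply Eq_ax, Q8. Qed.
Lemma L13 : forall x y z, limp x (lvee y z) = lvee (limp x y) (limp x z).
Proof.
  intros; lsimp. eapply Eq_trans; [apply Eq_ax, Q7|]. apply Eq_vee_comm.
Qed.
Lemma LS1 : forall x, lplus x = limp (limp lone lone) (lplus x).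
Proof. intros; lsimp. apply Eq_o. Qed.
Lemma LS2 : forall x, lminus x = limp (limp lone lone) (lminus x).
Proof. intros; lsimp. apply Eq_o. Qed.

Definition LA : SQWalg :=
  @Build_SQWalg Lc limp lneg lplus lminus lone L1 L2 L3 L4 L5a L5b L6a L6b L7 L8 L9 L10
    L11 L12 L13 LS1 LS2.

Lemma eval_LA q : eval LA (fun x => cls (Var x)) q = cls q.
Proof.
  induction q; simpl.
  - reflexivity.
  - reflexivity.
  - rewrite IHq1, IHq2. apply limp_cls.
  - rewrite IHq. apply lneg_cls.
Qed.

Lemma valid_o q : sqw_valid q -> pr (Imp o q).
Proof.
  intros H. specialize (H LA (fun x => cls (Var x))). rewrite eval_LA in H.
  destruct H as [c Hc]. destruct (cls_surj c) as [p ->].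
  simpl in Hc. unfold lone in Hc. rewrite !limp_cls in Hc. apply cls_eq in Hc.
  destruct Hc as [_ H2]. apply (MPo V (fplus p)); [apply Q10 | exact H2].
Qed.
End Lind.

Lemma valid_nn V (q : form V) : sqw_valid (Neg (Neg q)) -> sqw_valid q.
Proof. intros H A v. specialize (H A v). simpl in H. rewrite ax9 in H. exact H. Qed.

Lemma completeness V (q : form V) :
  (sqw_valid q -> provable q) /\ (sqw_valid (Neg q) -> provable (Neg q)).
Proof.
  induction q as [x| |a IHa b IHb|a IHa].
  - split; intros H.
    + exfalso. apply M3_not_des. exact (H M3 (fun _ => tF)).
    + exfalso. apply M3_not_des. exact (H M3 (fun _ => tT)).
  - split; intros H.
    + apply (@AReg4 V One). apply Q10.
    + apply (@AReg3 V One). apply valid_o. exact H.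
  - split; intros H.
    + apply (@AReg1 V One). apply valid_o. exact H.
    + apply (@AReg2 V One). apply valid_o. exact H.
  - split; intros H.
    + apply IHa. exact H.
    + apply Inv1. apply IHa. apply valid_nn. exact H.
Qed.

Theorem theorem4p1 (V : Type) (q : form V) :
  sqw_valid q <-> provable q.
Proof.
  split.
  - apply completeness.
  - apply soundness.
Qed.
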